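(* Assume (F), fix $\alpha\in\,]0,1[$, and let $0\le u^-<u^+\le V$ with $\hat\rho_{u^+}>\check\rho_{u^-}$. Then $\check\rho_{u^+}<\check\rho_{u^-}<\hat\rho_{u^+}<\hat\rho_{u^-}$ and $$u^+-u^-\ \ge\ \frac{\beta}{2}\,\big(\hat\rho_{u^-}-\hat\rho_{u^+}\big).$$
   Context: Hypothesis (F): $R>0$; $f\in C^2([0,R];[0,+\infty))$ with $f(\rho)=\rho v(\rho)$, $v\in C^2([0,R];[0,+\infty))$; $f(0)=f(R)=0$; there are $B\ge\beta>0$ with $-B\le f''\le-\beta$ on $[0,R]$; $v'(\rho)<0$ for $\rho\in\,]0,R[$. Let $V:=\max_{[0,R]}v=v(0)$. Define $f_\alpha(\rho):=\alpha f(\rho/\alpha)$ for $\rho\in[0,\alpha R]$. For $u\in[0,V]$: $\tilde\rho_u$ is the unique solution of $f_\alpha'(\rho)=u$; $\varphi_u(\rho):=f_\alpha(\tilde\rho_u)+u(\rho-\tilde\rho_u)$ for $\rho\in[0,R]$; $\mathcal I_u:=\{\rho\in[0,R]: f(\rho)=\varphi_u(\rho)\}$, $\check\rho_u:=\min\mathcal I_u$, $\hat\rho_u:=\max\mathcal I_u$. *)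

(* Defs.v *)
From Stdlib Require Import Reals.
Open Scope R_scope.

(* Functions are given on all of R; f1, f2 (resp. v1, v2)
   are the first and second derivatives of f (resp. v), required to exist
   (as two-sided derivatives of the given representatives) at every point of
   [0, L], with f2, v2 continuous there.  L plays the role of R in the paper. *)
Definition hypF (L B beta : R) (f f1 f2 v v1 v2 : R -> R) : Prop :=
  0 < L /\
  (forall x, 0 <= x <= L -> derivable_pt_lim f x (f1 x)) /\
  (forall x, 0 <= x <= L -> derivable_pt_lim f1 x (f2 x)) /\
  (forall x, 0 <= x <= L -> continuity_pt f2 x) /\
  (forall x, 0 <= x <= L -> derivable_pt_lim v x (v1 x)) /\
  (forall x, 0 <= x <= L -> derivable_pt_lim v1 x (v2 x)) /\
  (forall x, 0 <= x <= L -> continuity_pt v2 x) /\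
  (forall x, 0 <= x <= L -> 0 <= f x) /\
  (forall x, 0 <= x <= L -> 0 <= v x) /\
  (forall x, 0 <= x <= L -> f x = x * v x) /\
  f 0 = 0 /\ f L = 0 /\
  0 < beta <= B /\
  (forall x, 0 <= x <= L -> - B <= f2 x <= - beta) /\
  (forall x, 0 < x < L -> v1 x < 0).

Definition is_max_on (L : R) (v : R -> R) (V : R) : Prop :=
  (exists x, 0 <= x <= L /\ v x = V) /\ (forall x, 0 <= x <= L -> v x <= V).

Definition falpha (alpha : R) (f : R -> R) (rho : R) : R := alpha * f (rho / alpha).

Definition is_rtilde (L alpha : R) (f : R -> R) (u rt : R) : Prop :=
  0 <= rt <= alpha * L /\ derivable_pt_lim (falpha alpha f) rt u.

Definition phi (alpha : R) (f : R -> R) (u rt rho : R) : R :=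
  falpha alpha f rt + u * (rho - rt).

Definition in_I (L alpha : R) (f : R -> R) (u rt rho : R) : Prop :=
  0 <= rho <= L /\ f rho = phi alpha f u rt rho.

Definition is_min_I (L alpha : R) (f : R -> R) (u rt m : R) : Prop :=
  in_I L alpha f u rt m /\ (forall r, in_I L alpha f u rt r -> m <= r).

Definition is_max_I (L alpha : R) (f : R -> R) (u rt m : R) : Prop :=
  in_I L alpha f u rt m /\ (forall r, in_I L alpha f u rt r -> r <= m).

(* Main.v *)
Require Import Defs.
From Stdlib Require Import Reals Lra Psatz.
Open Scope R_scope.

Lemma dpl_eq (g : R -> R) x l l' : derivable_pt_lim g x l -> l = l' -> derivable_pt_lim g x l'.
Proof. intros H ->; exact H. Qed.

Lemma dcont (g : R -> R) x l : derivable_pt_lim g x l -> continuity_pt g x.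
Proof. intro H; apply derivable_continuous_pt; exists l; exact H. Qed.

Lemma f1_dec (L beta : R) (f1 f2 : R -> R)
  (Hd2 : forall x, 0<=x<=L -> derivable_pt_lim f1 x (f2 x))
  (Hf2 : forall x, 0<=x<=L -> f2 x <= -beta) :
  forall a b, 0<=a -> a<b -> b<=L -> f1 b - f1 a <= -beta*(b-a).
Proof.
  intros a b Ha Hab Hb.
  destruct (MVT_cor2 f1 f2 a b Hab) as [c [Hc Hc2]].
  { intros; apply Hd2; lra. }
  rewrite Hc. assert (f2 c <= -beta) by (apply Hf2; lra). nra.
Qed.

Lemma taylor (L beta : R) (f f1 f2 : R -> R)
  (Hd1 : forall x, 0<=x<=L -> derivable_pt_lim f x (f1 x))
  (Hd2 : forall x, 0<=x<=L -> derivable_pt_lim f1 x (f2 x))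
  (Hf2 : forall x, 0<=x<=L -> f2 x <= -beta) :
  forall x y, 0<=x<=L -> 0<=y<=L ->
    f y <= f x + f1 x*(y-x) - beta/2*((y-x)*(y-x)).
Proof.
  intros x y Hx Hy.
  set (h := (f - fct_cte (f x) - fct_cte (f1 x) * (id - fct_cte x)
       + fct_cte (beta/2) * ((id - fct_cte x)*(id - fct_cte x)))%F).
  assert (Hh: forall c, 0<=c<=L -> derivable_pt_lim h c (f1 c - f1 x + beta*(c-x))).
  { intros c Hc. unfold h. eapply dpl_eq.
    - repeat first [ apply derivable_pt_lim_minus | apply derivable_pt_lim_plus
                   | apply derivable_pt_lim_mult | apply derivable_pt_lim_const
                   | apply derivable_pt_lim_id | (apply Hd1; lra) ].
    - unfold fct_cte, id, mult_fct, minus_fct; simpl. field. }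
  assert (Hhv: forall t, h t = f t - f x - f1 x * (t - x) + beta/2 * ((t-x)*(t-x))).
  { intro t; unfold h, fct_cte, id, mult_fct, minus_fct, plus_fct; simpl; ring. }
  destruct (Rtotal_order x y) as [Hlt|[Heq|Hgt]].
  - destruct (MVT_cor2 h (fun c => f1 c - f1 x + beta*(c-x)) x y Hlt) as [c [Hc Hc2]].
    { intros; apply Hh; lra. }
    assert (f1 c - f1 x <= -beta*(c-x)) by (apply (f1_dec L beta f1 f2 Hd2 Hf2); lra).
    rewrite !Hhv in Hc. nra.
  - subst. nra.
  - destruct (MVT_cor2 h (fun c => f1 c - f1 x + beta*(c-x)) y x Hgt) as [c [Hc Hc2]].
    { intros; apply Hh; lra. }
    assert (f1 x - f1 c <= -beta*(x-c)) by (apply (f1_dec L beta f1 f2 Hd2 Hf2); lra).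
    rewrite !Hhv in Hc. nra.
Qed.

Lemma falpha_der (L alpha : R) (f f1 : R -> R)
  (Hd1 : forall x, 0<=x<=L -> derivable_pt_lim f x (f1 x)) u rt :
  0 < alpha -> 0 <= rt <= alpha * L -> derivable_pt_lim (falpha alpha f) rt u ->
  u = f1 (rt/alpha).
Proof.
  intros Ha Hr Hd.
  assert (Hx : 0 <= rt/alpha <= L).
  { split. apply Rmult_le_pos; [lra | left; apply Rinv_0_lt_compat; lra].
    apply (Rmult_le_reg_l alpha); [lra|]. field_simplify; lra. }
  assert (H2 : derivable_pt_lim (falpha alpha f) rt (f1 (rt/alpha))).
  { unfold falpha.
    change (derivable_pt_lim (mult_real_fct alpha (comp f (id * fct_cte (/alpha))%F)) rt
             (f1 (rt/alpha))).
    eapply dpl_eq.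
    - apply derivable_pt_lim_scal. apply derivable_pt_lim_comp.
      + apply derivable_pt_lim_mult; [apply derivable_pt_lim_id | apply derivable_pt_lim_const].
      + apply Hd1. exact Hx.
    - unfold fct_cte, id, mult_fct. simpl. unfold Rdiv. field. lra. }
  exact (uniqueness_limite _ _ _ _ Hd H2).
Qed.

Definition Gf (alpha : R) (f : R -> R) (u rt rho : R) := phi alpha f u rt rho - f rho.

Lemma Gcont (L alpha : R) (f f1 : R -> R)
  (Hd1 : forall x, 0<=x<=L -> derivable_pt_lim f x (f1 x)) u rt a :
  0 <= a <= L -> continuity_pt (Gf alpha f u rt) a.
Proof.
  intro Ha. unfold Gf, phi.
  change (continuity_pt ((fct_cte (falpha alpha f rt) + fct_cte u * (id - fct_cte rt)) - f)%F a).
  eapply dcont.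
  repeat first [ apply derivable_pt_lim_minus | apply derivable_pt_lim_plus
               | apply derivable_pt_lim_mult | apply derivable_pt_lim_const
               | apply derivable_pt_lim_id | (apply Hd1; lra) ].
Qed.

Lemma inI_G L alpha f u rt r : in_I L alpha f u rt r -> 0 <= r <= L /\ Gf alpha f u rt r = 0.
Proof. intros [H1 H2]. split; [exact H1|]. unfold Gf; rewrite H2; ring. Qed.

Lemma G_inI L alpha f u rt r : 0 <= r <= L -> Gf alpha f u rt r = 0 -> in_I L alpha f u rt r.
Proof. intros H1 H2. split; [exact H1|]. unfold Gf in H2; lra. Qed.

Lemma P_lem (L alpha : R) (f f1 : R -> R)
  (Hd1 : forall x, 0<=x<=L -> derivable_pt_lim f x (f1 x)) u rt rc rh y :
  is_min_I L alpha f u rt rc -> is_max_I L alpha f u rt rh ->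
  Gf alpha f u rt 0 >= 0 -> Gf alpha f u rt L >= 0 -> 0 <= y <= L ->
  Gf alpha f u rt y < 0 -> rc < y < rh.
Proof.
  intros [Hc Hcm] [Hh Hhm] G0 GL Hy Gy.
  set (G := Gf alpha f u rt) in *.
  split.
  - destruct (Rlt_or_le rc y) as [|Hle]; [assumption|exfalso].
    assert (exists z, 0 <= z <= y /\ G z = 0) as [z [Hz Gz]].
    { destruct (Req_dec (G 0) 0) as [E|E].
      - exists 0; split; [lra|exact E].
      - assert (0 < y).
        { destruct (Req_dec y 0) as [E2|E2]; [|lra]. subst y. lra. }
        destruct (Ranalysis5.IVT_interv (fun r => - G r) 0 y) as [z [Hz Gz]].
        + intros a Ha. apply continuity_pt_opp. apply (Gcont L alpha f f1 Hd1); lra.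
        + lra.
        + lra.
        + lra.
        + exists z; split; [exact Hz|lra]. }
    assert (rc <= z) by (apply Hcm; apply G_inI; [lra|exact Gz]).
    destruct (inI_G _ _ _ _ _ _ Hc) as [_ Gc].
    assert (z = y \/ z < y) as [->|] by lra; [fold G in Gc; lra| ].
    lra.
  - destruct (Rlt_or_le y rh) as [|Hle]; [assumption|exfalso].
    assert (exists z, y <= z <= L /\ G z = 0) as [z [Hz Gz]].
    { destruct (Req_dec (G L) 0) as [E|E].
      - exists L; split; [lra|exact E].
      - assert (y < L).
        { destruct (Req_dec y L) as [E2|E2]; [|lra]. subst y. lra. }
        destruct (Ranalysis5.IVT_interv G y L) as [z [Hz Gz]].
        + intros a Ha. apply (Gcont L alpha f f1 Hd1); lra.
        + lra.
        + lra.
        + lra.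
        + exists z; split; [exact Hz|lra]. }
    assert (z <= rh) by (apply Hhm; apply G_inI; [lra|exact Gz]).
    destruct (inI_G _ _ _ _ _ _ Hh) as [_ Gh].
    fold G in Gh.
    assert (z = y \/ y < z) as [->|] by lra; lra.
Qed.

Theorem mainTheorem5
  (L B beta V : R) (f f1 f2 v v1 v2 : R -> R)
  (alpha um up rtm rtp rcm rhm rcp rhp : R) :
  hypF L B beta f f1 f2 v v1 v2 ->
  is_max_on L v V ->
  0 < alpha < 1 ->
  0 <= um -> um < up -> up <= V ->
  is_rtilde L alpha f um rtm ->
  is_rtilde L alpha f up rtp ->
  is_min_I L alpha f um rtm rcm ->
  is_max_I L alpha f um rtm rhm ->
  is_min_I L alpha f up rtp rcp ->
  is_max_I L alpha f up rtp rhp ->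
  rhp > rcm ->
  (rcp < rcm /\ rcm < rhp /\ rhp < rhm) /\
  up - um >= beta / 2 * (rhm - rhp).
Proof.
  intros HF _ Hal Hum Hup _ [Hrtm Hdm] [Hrtp Hdp] Hcm Hhm Hcp Hhp Hgt.
  destruct HF as [HL [Hd1 [Hd2 [_ [_ [_ [_ [Hfpos [_ [_ [Hf0 [HfL [Hb [Hf2 _]]]]]]]]]]]]]].
  assert (Hf2' : forall x, 0<=x<=L -> f2 x <= -beta) by (intros x Hx; apply Hf2 in Hx; lra).
  pose proof (taylor L beta f f1 f2 Hd1 Hd2 Hf2') as T.
  pose proof (f1_dec L beta f1 f2 Hd2 Hf2') as Dec.
  pose proof (falpha_der L alpha f f1 Hd1 um rtm ltac:(lra) Hrtm Hdm) as Eum.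
  pose proof (falpha_der L alpha f f1 Hd1 up rtp ltac:(lra) Hrtp Hdp) as Eup.
  set (xm := rtm/alpha) in *. set (xp := rtp/alpha) in *.
  assert (Rm : rtm = alpha * xm) by (unfold xm; field; lra).
  assert (Rp : rtp = alpha * xp) by (unfold xp; field; lra).
  assert (Xm : 0 <= xm <= L) by nra.
  assert (Xp : 0 <= xp <= L) by nra.
  assert (GE : forall u rt r, Gf alpha f u rt r = alpha * f (rt/alpha) + u*(r - rt) - f r)
    by (intros; unfold Gf, phi, falpha; ring).
  destruct (inI_G _ _ _ _ _ _ (proj1 Hcm)) as [Icm Zcm].
  destruct (inI_G _ _ _ _ _ _ (proj1 Hhm)) as [Ihm Zhm].
  destruct (inI_G _ _ _ _ _ _ (proj1 Hcp)) as [Icp Zcp].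
  destruct (inI_G _ _ _ _ _ _ (proj1 Hhp)) as [Ihp Zhp].
  rewrite GE in Zcm, Zhm, Zcp, Zhp. fold xm in Zcm, Zhm. fold xp in Zcp, Zhp.
  assert (Xp0 : 0 < xp).
  { destruct (Req_dec xp 0) as [E|E]; [|lra]. exfalso.
    rewrite E in Zhp, Rp, Eup. rewrite Rp in Zhp.
    pose proof (T 0 rhp ltac:(lra) Ihp). rewrite Hf0 in *. rewrite Eup in Zhp. assert (0 < rhp) by lra. assert (0 < beta/2*(rhp*rhp)) by (apply Rmult_lt_0_compat; nra). nra. }
  assert (Xm0 : 0 < xm).
  { destruct (Req_dec xm 0) as [E|E]; [|lra]. exfalso.
    rewrite E in Eum. pose proof (Dec 0 xp ltac:(lra) Xp0 ltac:(lra)). nra. }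
  assert (G0 : forall u rt x, rt = alpha*x -> u = f1 x -> 0 <= x <= L -> Gf alpha f u rt 0 >= 0).
  { intros u rt x Hr Hu Hx. rewrite GE. replace (rt/alpha) with x by (rewrite Hr; field; lra).
    pose proof (T x 0 Hx ltac:(lra)). rewrite Hf0 in *. rewrite Hr, Hu. assert (0 <= beta/2*(x*x)) by (apply Rmult_le_pos; [lra|nra]). assert (0 <= alpha*(beta/2*(x*x))) by nra. nra. }
  assert (GL : forall u rt x, rt = alpha*x -> u = f1 x -> 0 <= x <= L -> 0 <= u -> Gf alpha f u rt L >= 0).
  { intros u rt x Hr Hu Hx Hu0. rewrite GE. replace (rt/alpha) with x by (rewrite Hr; field; lra).
    pose proof (Hfpos x Hx). rewrite HfL, Hr, Hu. rewrite Hu in Hu0. assert (0 <= L - alpha*x) by nra. assert (0 <= alpha * f x) by nra. assert (0 <= f1 x * (L - alpha*x)) by nra. lra. }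
  assert (Gt : forall u rt x, rt = alpha*x -> u = f1 x -> 0 < x <= L -> Gf alpha f u rt rt < 0).
  { intros u rt x Hr Hu Hx. rewrite GE. replace (rt/alpha) with x by (rewrite Hr; field; lra).
    assert (Ha : 0 <= alpha * x <= L) by nra.
    pose proof (T (alpha*x) x Ha ltac:(lra)) as T1.
    pose proof (T (alpha*x) 0 Ha ltac:(lra)) as T2.
    assert (Hab: alpha*(1-alpha) > 0) by nra.
    rewrite Hr.
    assert (alpha * f x <= alpha * (f (alpha * x) + f1 (alpha * x) * (x - alpha * x) -
        beta / 2 * ((x - alpha * x) * (x - alpha * x)))) by (apply Rmult_le_compat_l; lra).
    assert ((1-alpha) * f 0 <= (1-alpha) * (f (alpha * x) + f1 (alpha * x) * (0 - alpha * x) -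
        beta / 2 * ((0 - alpha * x) * (0 - alpha * x)))) by (apply Rmult_le_compat_l; lra).
    assert (0 < x*x) by nra.
    assert (0 < beta/2 * (alpha*(1-alpha)) * (x*x)) by (apply Rmult_lt_0_compat; nra).
    nra. }
  pose proof (G0 up rtp xp Rp Eup Xp) as Gp0.
  pose proof (G0 um rtm xm Rm Eum Xm) as Gm0.
  pose proof (GL up rtp xp Rp Eup Xp ltac:(lra)) as GpL.
  pose proof (GL um rtm xm Rm Eum Xm Hum) as GmL.
  pose proof (Gt up rtp xp Rp Eup ltac:(lra)) as Gpt.
  pose proof (Gt um rtm xm Rm Eum ltac:(lra)) as Gmt.
  pose proof (P_lem L alpha f f1 Hd1 up rtp rcp rhp rtp Hcp Hhp Gp0 GpL ltac:(nra) Gpt) as Op.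
  pose proof (P_lem L alpha f f1 Hd1 um rtm rcm rhm rtm Hcm Hhm Gm0 GmL ltac:(nra) Gmt) as Om.
  assert (Dlin : forall a b, (Gf alpha f up rtp a - Gf alpha f um rtm a)
          - (Gf alpha f up rtp b - Gf alpha f um rtm b) = (up - um) * (a - b))
    by (intros; rewrite !GE; ring).
  assert (Dp : Gf alpha f up rtp rtp - Gf alpha f um rtm rtp <= 0).
  { rewrite !GE. fold xm xp. pose proof (T xm xp Xm Xp). rewrite Eup, Eum, Rp, Rm. assert (0 <= beta/2*((xp-xm)*(xp-xm))) by (apply Rmult_le_pos; [lra|apply Rle_0_sqr]). nra. }
  assert (Dm : Gf alpha f up rtp rtm - Gf alpha f um rtm rtm >= 0).
  { rewrite !GE. fold xm xp. pose proof (T xp xm Xp Xm). rewrite Eup, Eum, Rp, Rm. assert (0 <= beta/2*((xm-xp)*(xm-xp))) by (apply Rmult_le_pos; [lra|apply Rle_0_sqr]). nra. }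
  assert (GpE : forall r, Gf alpha f up rtp r = alpha * f xp + up*(r - rtp) - f r)
    by (intros; rewrite GE; reflexivity).
  assert (GmE : forall r, Gf alpha f um rtm r = alpha * f xm + um*(r - rtm) - f r)
    by (intros; rewrite GE; reflexivity).
  assert (O1 : rcp < rcm).
  { destruct (Rlt_or_le rcp rcm) as [|Hle]; [assumption|exfalso].
    pose proof (Dlin rcm rtp) as D1.
    assert (Gf alpha f up rtp rcm < 0).
    { rewrite (GmE rcm) in D1. nra. }
    pose proof (P_lem L alpha f f1 Hd1 up rtp rcp rhp rcm Hcp Hhp Gp0 GpL Icm H). lra. }
  assert (O2 : rhp < rhm).
  { destruct (Rlt_or_le rhp rhm) as [|Hle]; [assumption|exfalso].
    pose proof (Dlin rhp rtm) as D1.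
    assert (Gf alpha f um rtm rhp < 0).
    { rewrite (GpE rhp) in D1. nra. }
    pose proof (P_lem L alpha f f1 Hd1 um rtm rcm rhm rhp Hcm Hhm Gm0 GmL Ihp H). lra. }
  assert (O3 : Gf alpha f um rtm rcp >= 0).
  { destruct (Rlt_or_le (Gf alpha f um rtm rcp) 0) as [H|]; [|lra]. exfalso.
    pose proof (P_lem L alpha f f1 Hd1 um rtm rcm rhm rcp Hcm Hhm Gm0 GmL Icp H). lra. }
  assert (R1 : Gf alpha f up rtp rhm >= beta/2 * (rhm - rcp) * (rhm - rhp)).
  { rewrite GpE.
    pose proof (T rhp rhm Ihp Ihm) as T1.
    pose proof (T rhp rcp Ihp Icp) as T2.
    assert (Hs : (up - f1 rhp) * (rhp - rcp) >= beta/2 * ((rhp - rcp)*(rhp-rcp))) by nra.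
    assert (Hs' : up - f1 rhp >= beta/2 * (rhp - rcp)).
    { apply Rle_ge; apply Rmult_le_reg_r with (rhp - rcp); [lra|]. nra. }
    assert ((up - f1 rhp) * (rhm - rhp) >= beta/2 * (rhp - rcp) * (rhm - rhp)).
    { apply Rmult_ge_compat_r; lra. }
    nra. }
  split; [split; [exact O1| split; [exact Hgt | exact O2]]|].
  pose proof (Dlin rhm rcp) as D1.
  rewrite (GmE rhm) in D1. rewrite (GpE rcp) in D1.
  assert (Hk : (up - um) * (rhm - rcp) >= beta/2 * (rhm - rhp) * (rhm - rcp)) by nra.
  apply Rle_ge; apply Rmult_le_reg_r with (rhm - rcp); [lra|]. lra.
Qed.
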